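(* Let $H_\alpha(k)=-\Delta_\alpha(k)+V$, $k\in\mathbb T^d$, be the fiber magnetic Schrödinger operator on the fundamental graph $\mathcal G_*=(\mathcal V_*,\mathcal A_* )$ and put $v_x=V_x-\varkappa_x$, $\phi(\mathbf c,k)=\alpha(\mathbf c)+\langle\tau(\mathbf c),k\rangle$. Then $$\operatorname{Tr}H_\alpha(k)=\sum_{x\in\mathcal V_*}v_x+\sum_{\mathbf c\in\mathcal C_1}\cos\phi(\mathbf c,k),$$ $$\operatorname{Tr}H_\alpha^2(k)=\sum_{x\in\mathcal V_*}v_x^2+2\sum_{\mathbf c\in\mathcal C_1}v_{x_{\mathbf c}}\cos\phi(\mathbf c,k)+\sum_{\mathbf c\in\mathcal C_2}\cos\phi(\mathbf c,k),$$ $$\frac1{(2\pi)^d}\int_{\mathbb T^d}\operatorname{Tr}H_\alpha(k)dk=\sum_{x\in\mathcal V_*}v_x+\sum_{\mathbf c\in\mathcal C_1^0}\cos\alpha(\mathbf c),$$ $$\frac1{(2\pi)^d}\int_{\mathbb T^d}\operatorname{Tr}H_\alpha^2(k)dk=\sum_{x\in\mathcal V_*}v_x^2+2\sum_{\mathbf c\in\mathcal C_1^0}v_{x_{\mathbf c}}\cos\alpha(\mathbf c)+\sum_{\mathbf c\in\mathcal C_2^0}\cos\alpha(\mathbf c),$$ where $x_{\mathbf c}$ is the unique vertex of the cycle $\mathbf c\in\mathcal C_1$. If there are no loops in $\mathcal G_*$, then $\operatorname{Tr}H_\alpha(k)=\frac1{(2\pi)^d}\int_{\mathbb T^d}\operatorname{Tr}H_\alpha(k)dk=\sum_{x\in\mathcal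 V_*}v_x$, and if in addition there are no multiple edges in $\mathcal G_*$, then $$\operatorname{Tr}H_\alpha^2(k)=\frac1{(2\pi)^d}\int_{\mathbb T^d}\operatorname{Tr}H_\alpha^2(k)dk=\#\mathcal A_*+\sum_{x\in\mathcal V_*}v_x^2 .$$
   Context: Let $\Gamma\subset\mathbb R^d$ be a lattice with basis $\mathfrak a_1,\dots,\mathfrak a_d$ and fundamental cell $\Omega=\{\sum_sx_s\mathfrak a_s:(x_s)\in[0,1)^d\}$. Let $\mathcal G=(\mathcal V,\mathcal E)$ be a connected, locally finite, infinite graph embedded in $\mathbb R^d$ (loops and multiple edges allowed), invariant under translations by $\Gamma$, with finite quotient $\mathcal G_*=\mathcal G/\Gamma=(\mathcal V_*,\mathcal E_* )$; $\nu=\#\mathcal V_*$. Each unoriented edge gives two oriented edges; $\mathcal A,\mathcal A_*$ are the oriented edge sets (so $\#\mathcal A_*=\sum_x\varkappa_x$); $\underline{\mathbf e}$ is the inverse; $\varkappa_x$ is the number of oriented edges starting at $x$ (loops counted twice). Edge index: $x=x_0+[x]$ with $x_0\in\mathcal V\cap\Omega$, $[x]\in\Gamma$ with coordinates $[x]_{\mathbb A}\in\mathbb Z^d$; $\tau((x,y))=[y]_{\mathbb A}-[x]_{\mathbb A}$, defined on $\mathcal A_*$ by $\Gamma$-invariance. Periodic magnetic potential $\alpha:\mathcal A\to\mathbb R$ with $\alpha(\underline{\mathbf e})=-\alpha(\mathbf e)$, $\Gamma$-invariant; $V$ a real $\Gamma$-periodic function on $\mathcal V$ (viewed on $\mathcal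 V_*$). For $k\in\mathbb T^d=\mathbb R^d/(2\pi\mathbb Z)^d$: $H_\alpha(k)=A_\alpha(k)-\varkappa+V$ on $\mathbb C^\nu$, $(A_\alpha(k)f)_x=\sum_{\mathbf e=(x,y)\in\mathcal A_*}e^{i(\alpha(\mathbf e)+\langle\tau(\mathbf e),k\rangle)}f_y$, $(\varkappa f)_x=\varkappa_xf_x$, $(Vf)_x=V_xf_x$. Cycles in $\mathcal G_*$: ordered sequences of oriented edges $(\mathbf e_1,\dots,\mathbf e_n)$, $\mathbf e_s=(x_{s-1},x_s)$, $x_n=x_0$ (distinct cyclic shifts distinct, backtracking allowed); index $\tau(\mathbf c)=\sum\tau(\mathbf e)$; flux $\alpha(\mathbf c)=(\sum\alpha(\mathbf e))\bmod2\pi$. $\mathcal C_n$ = cycles of length $n$; $\mathcal C_n^0$ = those with zero index. In particular $\mathcal C_1$ consists of the oriented loops of $\mathcal G_*$. *)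

(* Defs.v *)
From HB Require Import structures.
From mathcomp Require Import all_boot all_order all_algebra.
From mathcomp Require Import all_classical all_reals all_analysis.
From mathcomp Require Export complex.
Export Order.TTheory GRing.Theory Num.Theory.

Set Implicit Arguments.
Unset Strict Implicit.
Unset Printing Implicit Defensive.

Local Open Scope ring_scope.

(* Data of the fundamental graph G_* = (V_*, A_* ):
   vertices V_* = 'I_nu, oriented edges = a finType A, with source/target maps
   src, tgt : A -> 'I_nu, edge index tau : A -> Z^d (as 'I_d -> int),
   magnetic potential alpha : A -> R, potential Vp : 'I_nu -> R. *)

Section FiberOperator.
Variables (R : realType) (d nu : nat) (A : finType).
Variables (src tgt : A -> 'I_nu) (tau : A -> 'I_d -> int) (alpha : A -> R)
          (Vp : 'I_nu -> R).

Definition expi (theta : R) : R[i] := (cos theta +i* sin theta)%C.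

Definition ip (t : 'I_d -> int) (k : 'I_d -> R) : R := \sum_(j < d) (t j)%:~R * k j.

(* kappa_x = number of oriented edges starting at x (loops counted twice,
   since a loop contributes two oriented edges e and its inverse) *)
Definition kappa (x : 'I_nu) : nat := #|[set e : A | src e == x]|.

Definition vpot (x : 'I_nu) : R := Vp x - (kappa x)%:R.

Definition Amat (k : 'I_d -> R) : 'M[R[i]]_nu :=
  \matrix_(x, y) \sum_(e : A | (src e == x) && (tgt e == y))
                    expi (alpha e + ip (tau e) k).

Definition Hmat (k : 'I_d -> R) : 'M[R[i]]_nu :=
  Amat k - \matrix_(x, y) ((x == y)%:R * ((kappa x)%:R)%:C%C)
         + \matrix_(x, y) ((x == y)%:R * (Vp x)%:C%C).

(* cycles of length n: ordered sequences (e_1,...,e_n) with tgt e_s = src e_{s+1}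
   and tgt e_n = src e_1 (cyclic shifts are distinct, backtracking allowed) *)
Definition is_cycle (n : nat) (c : n.-tuple A) : bool :=
  [forall i : 'I_n, tgt (tnth c i) == src (tnth c (ordS i))].

Definition cyc_index (n : nat) (c : n.-tuple A) : 'I_d -> int :=
  fun j => \sum_(i < n) tau (tnth c i) j.

(* flux alpha(c) = sum of alpha(e) (only used through cos, so no reduction mod 2 pi) *)
Definition cyc_flux (n : nat) (c : n.-tuple A) : R := \sum_(i < n) alpha (tnth c i).

Definition is_cycle0 (n : nat) (c : n.-tuple A) : bool :=
  is_cycle c && [forall j : 'I_d, cyc_index c j == 0].

Definition phi (n : nat) (c : n.-tuple A) (k : 'I_d -> R) : R :=
  cyc_flux c + ip (cyc_index c) k.

End FiberOperator.

(* Integration over the torus T^d = R^d/(2 pi Z)^d, realised as the iterated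
   Lebesgue integral over the fundamental domain [0, 2 pi]^d. *)
Section Torus.
Variable R : realType.

Fixpoint iter_int (n : nat) (g : (nat -> R) -> R) : R :=
  match n with
  | 0 => g (fun _ => 0)
  | n'.+1 => Rintegral lebesgue_measure `[0, 2 * pi]%classic
               (fun t : R => iter_int n' (fun k => g (fun j => if j == n' then t else k j)))
  end.

Definition torus_avg (d : nat) (f : ('I_d -> R) -> R) : R :=
  (2 * pi) ^- d * iter_int d (fun k : nat -> R => f (fun j : 'I_d => k j)).

Definition torus_avgC (d : nat) (F : ('I_d -> R) -> R[i]) : R[i] :=
  (torus_avg (fun k => complex.Re (F k)) +i* torus_avg (fun k => complex.Im (F k)))%C.

End Torus.

(* Main.v *)
Require Import Defs.
From HB Require Import structures.
From mathcomp Require Import all_boot all_order all_algebra.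
From mathcomp Require Import all_classical all_reals all_analysis.
From mathcomp Require Import complex.
From mathcomp Require Import ring lra.
Import Order.TTheory GRing.Theory Num.Theory.
Local Open Scope ring_scope.


Module Analytic.
Import numFieldNormedType.Exports.
Local Open Scope classical_set_scope.


Section OneD.
Variable R : realType.
Notation mu := (@lebesgue_measure R).

Lemma sin_period_nat (a : R) (n : nat) : sin (a + n%:R * (2 * pi)) = sin a.
Proof.
elim: n a => [|n IH] a; first by rewrite mul0r addr0.
have -> : a + n.+1%:R * (2 * pi) = (a + n%:R * (2 * pi)) + pi *+ 2.
  by rewrite -mulr_natl mulrSr; lra.
by rewrite sinD2pi IH.
Qed.

Lemma sin_period_int (a : R) (m : int) : sin (a + m%:~R * (2 * pi)) = sin a.
Proof.
case: m => n; first by rewrite pmulrn sin_period_nat.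
rewrite NegzE mulrNz mulNr -pmulrn.
by rewrite -[in RHS](subrK (n.+1%:R * (2 * pi)) a) sin_period_nat.
Qed.

Lemma mu02 : fine (mu `[0, 2 * pi]) = 2 * pi.
Proof. by rewrite lebesgue_measure_itv /= lte_fin mulr_gt0 ?pi_gt0 //= subr0. Qed.

End OneD.


Section OneD.
Variable R : realType.
Notation mu := (@lebesgue_measure R).

Lemma aff_derive (a c x : R) : is_derive x 1 (fun t : R => a + c * t) c.
Proof.
have H : is_derive x 1 (cst a + c *: (@id R)) (0 + c *: 1).
  exact: is_deriveD.
by rewrite add0r /GRing.scale /= mulr1 in H.
Qed.

Lemma sin_aff_derive (a c x : R) :
  is_derive x 1 (fun t : R => sin (a + c * t)) (cos (a + c * x) * c).
Proof.
have df : derivable (fun t : R => a + c * t) x 1 by case: (aff_derive a c x).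
have dg : derivable (@sin R) (a + c * x) 1 by exact: derivable_sin.
have dc : derivable (sin \o (fun t : R => a + c * t)) x 1.
  apply/derivable1_diffP; apply: differentiable_comp; exact/derivable1_diffP.
apply: DeriveDef => //.
rewrite -derive1E (derive1_comp df dg) !derive1E.
by rewrite (@derive_val _ _ _ _ _ _ _ (aff_derive a c x)) (@derive_val _ _ _ _ _ _ _ (is_derive_sin _)).
Qed.

End OneD.


Section OneD.
Variable R : realType.
Notation mu := (@lebesgue_measure R).

Lemma cos_aff_cont (w a c : R) : continuous (fun t : R => w * cos (a + c * t)).
Proof.
move=> x; apply: continuousM; first exact: cst_continuous.
apply: (@continuous_comp _ _ _ (fun t : R => a + c * t) cos); last exact: continuous_cos.
apply: continuousD; first exact: cst_continuous.
apply: continuousM; [exact: cst_continuous|exact: cvg_id].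
Qed.

Lemma sin_aff_cont (w a c : R) : continuous (fun t : R => w * sin (a + c * t)).
Proof.
move=> x; apply: continuousM; first exact: cst_continuous.
apply: (@continuous_comp _ _ _ (fun t : R => a + c * t) sin); last exact: continuous_sin.
apply: continuousD; first exact: cst_continuous.
apply: continuousM; [exact: cst_continuous|exact: cvg_id].
Qed.

Lemma int_cos (w a : R) (m : int) :
  Rintegral mu `[0, 2 * pi] (fun t => w * cos (a + m%:~R * t)) =
  if m == 0 then 2 * pi * (w * cos a) else 0.
Proof.
have pi2 : (0 : R) < 2 * pi by rewrite mulr_gt0 ?pi_gt0.
case: eqP => [->|/eqP m0].
  have -> : (fun t : R => w * cos (a + (0:int)%:~R * t)) = fun=> w * cos a.
    by apply: funext => t; rewrite mul0r addr0.
  by rewrite Rintegral_cst // mu02 mulrC.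
have mR : (m%:~R : R) != 0 by rewrite intr_eq0.
pose F t := w / m%:~R * sin (a + m%:~R * t).
have cF : continuous F by exact: sin_aff_cont.
have dF (x : R) : is_derive x (1 : R) F (w / m%:~R * (cos (a + m%:~R * x) * m%:~R)).
  have := is_deriveZ (w / m%:~R) (@sin_aff_derive R a m%:~R x).
  by rewrite /GRing.scale /=.
rewrite /Rintegral (@continuous_FTC2 _ _ F) //.
- by rewrite /F /= mulr0 addr0 sin_period_int subrr.
- exact/continuous_subspaceT/cos_aff_cont.
- split.
  + by move=> x _; have [] := dF x.
  + by apply: cvg_at_right_filter; apply: cF.
  + by apply: cvg_at_left_filter; apply: cF.
- move=> x _; rewrite derive1E (@derive_val _ _ _ _ _ _ _ (dF x)).
  by field.
Qed.

End OneD.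


Section OneDsum.
Variable R : realType.
Notation mu := (@lebesgue_measure R).
Variables (X : Type) (w a : X -> R) (m : X -> int).

Lemma cont_sum (s : seq X) (b : R) :
  continuous (fun t : R => b + \sum_(x <- s) w x * cos (a x + (m x)%:~R * t)).
Proof.
elim: s b => [|y s IH] b.
  under eq_fun do rewrite big_nil; exact: cst_continuous.
have -> : (fun t : R => b + \sum_(x <- y :: s) w x * cos (a x + (m x)%:~R * t)) =
  (fun t => w y * cos (a y + (m y)%:~R * t)) \+ (fun t => b + \sum_(x <- s) w x * cos (a x + (m x)%:~R * t)).
  by apply: funext => t /=; rewrite big_cons addrCA.
move=> t; apply: continuousD; [exact: cos_aff_cont | exact: IH].
Qed.

Lemma integ (f : R -> R) : continuous f -> mu.-integrable `[0, 2 * pi] (EFin \o f).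
Proof.
move=> cf; apply: continuous_compact_integrable; first exact: segment_compact.
exact: continuous_subspaceT.
Qed.

Lemma L1D (s : seq X) (b : R) :
  Rintegral mu `[0, 2 * pi] (fun t => b + \sum_(x <- s) w x * cos (a x + (m x)%:~R * t)) =
  2 * pi * (b + \sum_(x <- s | m x == 0) w x * cos (a x)).
Proof.
elim: s b => [|y s IH] b.
  have -> : (fun t : R => b + \sum_(x <- [::]) w x * cos (a x + (m x)%:~R * t)) = fun=> b.
    by apply: funext => t; rewrite big_nil addr0.
  by rewrite big_nil addr0 Rintegral_cst // mu02 mulrC.
have -> : (fun t : R => b + \sum_(x <- y :: s) w x * cos (a x + (m x)%:~R * t)) =
  (fun t => w y * cos (a y + (m y)%:~R * t) + (b + \sum_(x <- s) w x * cos (a x + (m x)%:~R * t))).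
  by apply: funext => t /=; rewrite big_cons addrCA.
rewrite RintegralD //; [|exact/integ/cos_aff_cont|exact/integ/cont_sum].
rewrite int_cos IH big_cons.
by case: eqP => _; ring.
Qed.

End OneDsum.


Lemma forall_ordS (n : nat) (c : nat -> int) :
  [forall j : 'I_n.+1, c j == 0] = [forall j : 'I_n, c j == 0] && (c n == 0).
Proof.
apply/forallP/andP => [H|[/forallP H1 H2] j].
  split; last exact: (H ord_max).
  by apply/forallP => j; exact: (H (widen_ord (leqnSn n) j)).
have [jn|] := ltnP j n; first exact: (H1 (Ordinal jn)).
move=> nj; have -> : nat_of_ord j = n by apply/eqP; rewrite eqn_leq nj -ltnS ltn_ord.
exact: H2.
Qed.

Section GLs.
Variable R : realType.
Notation mu := (@lebesgue_measure R).

Lemma GL (n : nat) (X : Type) (s : seq X) (c : X -> nat -> int) :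
  forall (w a : X -> R) (b : R),
  iter_int n (fun k => b + \sum_(x <- s) w x * cos (a x + \sum_(j < n) (c x j)%:~R * k j)) =
  (2 * pi) ^+ n * (b + \sum_(x <- s | [forall j : 'I_n, c x j == 0]) w x * cos (a x)).
Proof.
elim: n => [|n IH] w a b.
  rewrite /= expr0 mul1r; congr (_ + _).
  rewrite [RHS]big_mkcond; apply: eq_bigr => x _.
  by rewrite big_ord0 addr0; case: forallP => // -[] [].
rewrite [in LHS]/=.
pose P x := [forall j : 'I_n, c x j == 0].
pose w' x := if P x then (2 * pi) ^+ n * w x else 0.
have -> : (fun t : R => iter_int n (fun k : nat -> R =>
        b + \sum_(x <- s) w x * cos
             (a x + \sum_(j < n.+1) (c x j)%:~R * (if (j : nat) == n then t else k j)))) =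
   (fun t => (2 * pi) ^+ n * b + \sum_(x <- s) w' x * cos (a x + (c x n)%:~R * t)).
  apply: funext => t.
  have -> : (fun k : nat -> R =>
        b + \sum_(x <- s) w x * cos
             (a x + \sum_(j < n.+1) (c x j)%:~R * (if (j : nat) == n then t else k j))) =
      (fun k : nat -> R => b + \sum_(x <- s) w x *
          cos ((a x + (c x n)%:~R * t) + \sum_(j < n) (c x j)%:~R * k j)).
    apply: funext => k; congr (_ + _); apply: eq_bigr => x _.
    rewrite big_ord_recr /= eqxx addrAC addrA; congr (w x * cos (_ + _ + _)).
    by rewrite (eq_bigr (fun j : 'I_n => (c x j)%:~R * k j)) // => j _; rewrite ltn_eqF.
  rewrite IH mulrDr big_distrr /= [in LHS]big_mkcond; congr (_ + _).
  by apply: eq_bigr => x _; rewrite /w' -/(P x); case: (P x); rewrite ?mulrA ?mul0r ?mulr0.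
rewrite L1D [LHS]mulrDr [RHS]mulrDr mulrA -exprS; apply: f_equal.
rewrite /w'.
rewrite !mulr_sumr [LHS]big_mkcond [RHS]big_mkcond; apply: eq_bigr => x _.
rewrite forall_ordS -/(P x).
by case: (P x); case: (c x n == 0); rewrite ?andbT ?andbF ?andTb ?andFb ?mul0r ?mulr0 // exprS -!mulrA.
Qed.

End GLs.


Section TA.
Variable R : realType.

Lemma TA (d : nat) (s : seq (R * R * ('I_d -> int))) (b : R) :
  torus_avg (fun k => b + \sum_(x <- s) x.1.1 * cos (x.1.2 + ip x.2 k)) =
  b + \sum_(x <- s | [forall j, x.2 j == 0]) x.1.1 * cos x.1.2.
Proof.
pose h (x : R * R * ('I_d -> int)) := (x.1, fun j : nat => oapp x.2 0 (insub j)).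
have hE (x : R * R * ('I_d -> int)) (j : 'I_d) : (h x).2 j = x.2 j.
  by rewrite /h /= (valK j).
rewrite /torus_avg.
have -> : (fun k : nat -> R => b + \sum_(x <- s) x.1.1 * cos (x.1.2 + ip x.2 (fun j : 'I_d => k j))) =
  (fun k : nat -> R => b + \sum_(x <- map h s) x.1.1 * cos (x.1.2 + \sum_(j < d) (x.2 j)%:~R * k j)).
  apply: funext => k; rewrite big_map; congr (_ + _); apply: eq_bigr => x _.
  by rewrite /ip; congr (_ * cos (_ + _)); apply: eq_bigr => j _; rewrite hE.
rewrite (@GL R d _ (map h s) (fun x => x.2) (fun x => x.1.1) (fun x => x.1.2) b).
rewrite mulrA mulVf ?mul1r; last by rewrite expf_neq0 // mulf_neq0 ?pi_gt0 ?lt0r_neq0 ?pi_gt0.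
congr (_ + _); rewrite big_map; apply: eq_bigl => x.
by apply: eq_forallb => j; rewrite hE.
Qed.

Lemma TA_cst (d : nat) (b : R) : torus_avg (fun _ : 'I_d -> R => b) = b.
Proof.
have := @TA d [::] b.
rewrite big_nil addr0 => H; rewrite -[RHS]H.
by apply: f_equal; apply: funext => k; rewrite big_nil addr0.
Qed.

End TA.

End Analytic.
Import Analytic.


Section Cplx.
Variable R : realType.

Lemma sumC (X : Type) (s : seq X) (P : pred X) (x y : X -> R) :
  \sum_(i <- s | P i) ((x i +i* y i)%C : R[i]) =
  ((\sum_(i <- s | P i) x i) +i* (\sum_(i <- s | P i) y i))%C.
Proof.
elim: s => [|z s IH]; first by rewrite !big_nil.
rewrite !big_cons; case: (P z) => //.
by rewrite IH.
Qed.

Lemma expiD (a b : R) : expi a * expi b = expi (a + b).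
Proof.
rewrite /expi cosD sinD /=.
by congr (Complex _ _); ring.
Qed.

Lemma real_sum (I : finType) (P : pred I) (sg : I -> I) (u th : I -> R) :
  involutive sg -> (forall i, P (sg i) = P i) ->
  (forall i, P i -> u (sg i) = u i) -> (forall i, th (sg i) = - th i) ->
  \sum_(i | P i) (u i)%:C%C * expi (th i) = (\sum_(i | P i) u i * cos (th i))%:C%C.
Proof.
move=> sgK Psg usg thsg.
have -> : \sum_(i | P i) (u i)%:C%C * expi (th i) =
    \sum_(i | P i) ((u i * cos (th i)) +i* (u i * sin (th i)))%C.
  by apply: eq_bigr => i _; rewrite /expi; simpc.
rewrite sumC.
have S0 : \sum_(i | P i) u i * sin (th i) = 0.
  have E : \sum_(i | P i) u i * sin (th i) = - \sum_(i | P i) u i * sin (th i).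
    rewrite [LHS](reindex_inj (can_inj sgK)) /= -sumrN.
    rewrite (eq_bigl P) => [|i]; last by rewrite Psg.
    by apply: eq_bigr => i Pi; rewrite usg // thsg sinN mulrN.
  by move: E; set S := \sum_(i | P i) _; lra.
by rewrite S0.
Qed.

End Cplx.


Section Tuples.
Variable A : finType.

Lemma tuple1_sum (R : nmodType) (P : pred (1.-tuple A)) (F : 1.-tuple A -> R) :
  \sum_(c : 1.-tuple A | P c) F c = \sum_(e | P [tuple e]) F [tuple e].
Proof.
rewrite (reindex (fun e : A => [tuple e])) //.
exists (fun c => thead c) => [e _|c _] //.
by apply: val_inj; case: c => [[|x []]] //=.
Qed.

Lemma tuple2_sum (R : nmodType) (P : pred (2.-tuple A)) (F : 2.-tuple A -> R) :
  \sum_(c : 2.-tuple A | P c) F c =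
  \sum_(p : A * A | P [tuple p.1; p.2]) F [tuple p.1; p.2].
Proof.
rewrite (reindex (fun p : A * A => [tuple p.1; p.2])) //.
exists (fun c => (tnth c ord0, tnth c (lift ord0 ord0))) => [[e f] _|c _] //.
by apply: val_inj; case: c => [[|x [|y []]]] //=.
Qed.

End Tuples.


Section Graph.
Variables (R : realType) (d nu : nat) (A : finType)
  (src tgt : A -> 'I_nu) (inv : A -> A) (tau : A -> 'I_d -> int)
  (alpha : A -> R) (Vp : 'I_nu -> R).
Hypotheses (inv_invol : forall e, inv (inv e) = e)
  (src_inv : forall e, src (inv e) = tgt e)
  (tgt_inv : forall e, tgt (inv e) = src e)
  (tau_inv : forall e, tau (inv e) = (fun j => - tau e j))
  (alpha_inv : forall e, alpha (inv e) = - alpha e).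

Let th (e : A) (k : 'I_d -> R) := alpha e + ip (tau e) k.
Let v := vpot src Vp.
Let H := Hmat src tgt tau alpha Vp.
Let Am := Amat src tgt tau alpha.

Lemma th_inv e k : th (inv e) k = - th e k.
Proof.
rewrite /th alpha_inv tau_inv /ip opprD -sumrN; congr (_ + _).
by apply: eq_bigr => j _; rewrite mulrNz mulNr.
Qed.

Lemma Hxy k x y : H k x y = Am k x y + (x == y)%:R * (v x)%:C%C.
Proof. by rewrite /H /Hmat !mxE /v /vpot rmorphB /=; ring. Qed.

Lemma Axy k x y : Am k x y = \sum_(e | (src e == x) && (tgt e == y)) expi (th e k).
Proof. by rewrite /Am /Amat mxE. Qed.

Lemma sum_g (T : nmodType) (g : A -> 'I_nu) (Q : A -> 'I_nu -> bool) (F : A -> 'I_nu -> T) :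
  \sum_x \sum_(e | Q e x && (g e == x)) F e x = \sum_(e | Q e (g e)) F e (g e).
Proof.
rewrite (exchange_big_dep predT) //= [RHS]big_mkcond; apply: eq_bigr => e _.
transitivity (\sum_(x | x == g e) (if Q e x then F e x else 0)).
  rewrite big_mkcond [RHS]big_mkcond; apply: eq_bigr => x _ /=.
  by rewrite [g e == x]eq_sym; case: (x == g e); case: (Q e x).
by rewrite big_pred1_eq.
Qed.

Lemma sum_g1 (T : nmodType) (g : A -> 'I_nu) (F : A -> 'I_nu -> T) :
  \sum_x \sum_(e | g e == x) F e x = \sum_e F e (g e).
Proof. by rewrite -(sum_g _ g (fun _ _ => true)). Qed.

Lemma tr1 k : \tr (H k) = (\sum_x v x + \sum_(e | src e == tgt e) cos (th e k))%:C%C.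
Proof.
rewrite /mxtrace.
under eq_bigr do rewrite Hxy eqxx mul1r Axy.
rewrite big_split /= addrC rmorphD rmorph_sum /=; congr (_ + _).
rewrite (sum_g _ tgt (fun e x => src e == x) (fun e _ => expi (th e k))).
transitivity (\sum_(e | src e == tgt e) (1 : R)%:C%C * expi (th e k)).
  by apply: eq_bigr => e _; rewrite mul1r.
rewrite (@real_sum R A (fun e => src e == tgt e) inv (fun _ => 1) (fun e => th e k)) //.
- by congr (_%:C)%C; apply: eq_bigr => e _; rewrite mul1r.
- by move=> e; rewrite src_inv tgt_inv eq_sym.
- by move=> e; rewrite th_inv.
Qed.

Lemma trH2_row k x : \sum_y H k x y * H k y x =
  \sum_y Am k x y * Am k y x + 2%:R * (v x)%:C%C * Am k x x + ((v x) ^+ 2)%:C%C.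
Proof.
rewrite (bigD1 x) //= [in RHS](bigD1 x) //= !Hxy eqxx mul1r.
have -> : \sum_(y | y != x) H k x y * H k y x = \sum_(y | y != x) Am k x y * Am k y x.
  apply: eq_bigr => y yx; rewrite !Hxy (negbTE yx) eq_sym (negbTE yx) !mul0r !addr0 //.
rewrite rmorphXn /=; ring.
Qed.

Lemma tr2 k : \tr (H k *m H k) =
  (\sum_x v x ^+ 2 + 2 * \sum_(e | src e == tgt e) v (src e) * cos (th e k)
   + \sum_(p : A * A | (src p.2 == tgt p.1) && (tgt p.2 == src p.1))
        cos (th p.1 k + th p.2 k))%:C%C.
Proof.
rewrite /mxtrace.
under eq_bigr do rewrite mxE trH2_row.
rewrite !big_split /= !rmorphD /= rmorphM rmorph_nat /= [in RHS]rmorph_sum /=.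
have -> : \sum_i 2 * (v i)%:C%C * Am k i i = 2 * \sum_i (v i)%:C%C * Am k i i.
  by rewrite big_distrr; apply: eq_bigr => i _; rewrite -mulrA.
rewrite [in RHS]addrC [in RHS](addrC (\sum_(i < nu) _)) addrA; congr (_ + _ + _).
-
  transitivity (\sum_x \sum_y \sum_(e | (src e == x) && (tgt e == y))
       \sum_(f | (src f == y) && (tgt f == x)) expi (th e k + th f k)).
    apply: eq_bigr => x _; apply: eq_bigr => y _.
    rewrite !Axy mulr_suml; apply: eq_bigr => e _; rewrite mulr_sumr.
    by apply: eq_bigr => f _; rewrite expiD.
  transitivity (\sum_x \sum_(e | src e == x)
      \sum_(f | (src f == tgt e) && (tgt f == x)) expi (th e k + th f k)).
    apply: eq_bigr => x _.
    exact: (sum_g _ tgt (fun e _ => src e == x)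
     (fun e y => \sum_(f | (src f == y) && (tgt f == x)) expi (th e k + th f k))).
  rewrite (sum_g1 _ src (fun e x => \sum_(f | (src f == tgt e) && (tgt f == x)) expi (th e k + th f k))).
  rewrite pair_big_dep /=.
  transitivity (\sum_(p : A * A | (src p.2 == tgt p.1) && (tgt p.2 == src p.1))
       (1 : R)%:C%C * expi (th p.1 k + th p.2 k)).
    by apply: eq_bigr => p _; rewrite mul1r.
  rewrite (@real_sum R (prod A A) (fun p => (src p.2 == tgt p.1) && (tgt p.2 == src p.1))
      (fun p => (inv p.1, inv p.2)) (fun _ => 1) (fun p => th p.1 k + th p.2 k)) //.
  + by congr (_%:C)%C; apply: eq_bigr => e _; rewrite mul1r.
  + by move=> [e f] /=; rewrite !inv_invol.
  + by move=> [e f] /=; rewrite !src_inv !tgt_inv andbC.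
  + move=> [e f]; change (th (inv e) k + th (inv f) k = - (th e k + th f k)).
    by rewrite !th_inv -opprD.
-
  congr (_ * _).
  transitivity (\sum_x \sum_(e | (src e == x) && (tgt e == x)) (v (tgt e))%:C%C * expi (th e k)).
    apply: eq_bigr => x _; rewrite Axy mulr_sumr; apply: eq_bigr => e /andP[_ /eqP ->] //.
  rewrite (sum_g _ tgt (fun e x => src e == x) (fun e _ => (v (tgt e))%:C%C * expi (th e k))).
  rewrite (@real_sum R A (fun e => src e == tgt e) inv (fun e => v (tgt e)) (fun e => th e k)) //.
  + by congr (_%:C)%C; apply: eq_bigr => e /eqP ->.
  + by move=> e; rewrite src_inv tgt_inv eq_sym.
  + by move=> e /eqP E; rewrite tgt_inv E.
  + by move=> e; rewrite th_inv.
Qed.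

End Graph.


Section Cyc.
Variables (R : realType) (d nu : nat) (A : finType)
  (src tgt : A -> 'I_nu) (tau : A -> 'I_d -> int) (alpha : A -> R).

Lemma is_cycle1 e : is_cycle src tgt [tuple e] = (tgt e == src e).
Proof.
apply/forallP/idP => [/(_ ord0) //| h i].
have t1 (j : 'I_1) : tnth [tuple e] j = e by rewrite (tnth_nth e); case: j => [[|[]]].
by rewrite !t1.
Qed.

Lemma is_cycle2 e f : is_cycle src tgt [tuple e; f] = (tgt e == src f) && (tgt f == src e).
Proof.
apply/forallP/andP => [h|[h1 h2] i].
  by split; [exact: (h ord0) | exact: (h (lift ord0 ord0))].
by case: i => [[|[|//]] ?]; rewrite !(tnth_nth e) /=.
Qed.

Lemma flux1 e : cyc_flux alpha [tuple e] = alpha e.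
Proof. by rewrite /cyc_flux big_ord1. Qed.

Lemma flux2 e f : cyc_flux alpha [tuple e; f] = alpha e + alpha f.
Proof. by rewrite /cyc_flux big_ord_recr big_ord1. Qed.

Lemma index1 e : cyc_index tau [tuple e] = tau e.
Proof. by apply: funext => j; rewrite /cyc_index big_ord1. Qed.

Lemma index2 e f : cyc_index tau [tuple e; f] = (fun j => tau e j + tau f j).
Proof. by apply: funext => j; rewrite /cyc_index big_ord_recr big_ord1. Qed.

Lemma ipD (t1 t2 : 'I_d -> int) (k : 'I_d -> R) :
  ip (fun j => t1 j + t2 j) k = ip t1 k + ip t2 k.
Proof. by rewrite /ip -big_split; apply: eq_bigr => j _; rewrite intrD mulrDl. Qed.

End Cyc.


Section TAs.
Variables (R : realType) (d : nat).

Lemma TA1 (T : finType) (P : pred T) (b : R) (w a : T -> R) (t : T -> 'I_d -> int) :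
  torus_avg (fun k => b + \sum_(c | P c) w c * cos (a c + ip (t c) k)) =
  b + \sum_(c | P c && [forall j, t c j == 0]) w c * cos (a c).
Proof.
pose h c := (w c, a c, t c).
have -> : (fun k => b + \sum_(c | P c) w c * cos (a c + ip (t c) k)) =
   (fun k => b + \sum_(x <- map h (seq.filter P (index_enum T))) x.1.1 * cos (x.1.2 + ip x.2 k)).
  by apply: funext => k; rewrite big_map big_filter.
by rewrite TA big_map big_filter_cond.
Qed.

Lemma TA2 (T1 T2 : finType) (P1 : pred T1) (P2 : pred T2) (b : R)
  (w1 a1 : T1 -> R) (t1 : T1 -> 'I_d -> int) (w2 a2 : T2 -> R) (t2 : T2 -> 'I_d -> int) :
  torus_avg (fun k => b + \sum_(c | P1 c) w1 c * cos (a1 c + ip (t1 c) k)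
                        + \sum_(c | P2 c) w2 c * cos (a2 c + ip (t2 c) k)) =
  b + \sum_(c | P1 c && [forall j, t1 c j == 0]) w1 c * cos (a1 c)
    + \sum_(c | P2 c && [forall j, t2 c j == 0]) w2 c * cos (a2 c).
Proof.
pose h1 c := (w1 c, a1 c, t1 c).
pose h2 c := (w2 c, a2 c, t2 c).
have -> : (fun k => b + \sum_(c | P1 c) w1 c * cos (a1 c + ip (t1 c) k)
                        + \sum_(c | P2 c) w2 c * cos (a2 c + ip (t2 c) k)) =
   (fun k => b + \sum_(x <- map h1 (seq.filter P1 (index_enum T1)) ++ map h2 (seq.filter P2 (index_enum T2)))
       x.1.1 * cos (x.1.2 + ip x.2 k)).
  by apply: funext => k; rewrite big_cat !big_map !big_filter addrA.
by rewrite TA big_cat !big_map !big_filter_cond addrA.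
Qed.

Lemma avgC_real (F : ('I_d -> R) -> R[i]) (f : ('I_d -> R) -> R) :
  (forall k, F k = (f k)%:C%C) -> torus_avgC F = (torus_avg f)%:C%C.
Proof.
move=> Ff; rewrite /torus_avgC.
have -> : (fun k => complex.Re (F k)) = f by apply: funext => k; rewrite Ff.
have -> : (fun k => complex.Im (F k)) = (fun _ => 0) by apply: funext => k; rewrite Ff.
by rewrite TA_cst.
Qed.

End TAs.

Theorem proposition3p5 (R : realType) (d nu : nat) (A : finType)
  (src tgt : A -> 'I_nu) (inv : A -> A) (tau : A -> 'I_d -> int)
  (alpha : A -> R) (Vp : 'I_nu -> R)
  (inv_invol : forall e, inv (inv e) = e)
  (inv_neq : forall e, inv e <> e)
  (src_inv : forall e, src (inv e) = tgt e)
  (tgt_inv : forall e, tgt (inv e) = src e)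
  (tau_inv : forall e, tau (inv e) = (fun j => - tau e j))
  (alpha_inv : forall e, alpha (inv e) = - alpha e) :
  let H := Hmat src tgt tau alpha Vp in
  let v := vpot src Vp in
  let ph n (c : n.-tuple A) k := phi tau alpha c k in
  let fl n (c : n.-tuple A) := cyc_flux alpha c in
  (forall k : 'I_d -> R,
     \tr (H k) =
       (\sum_(x < nu) v x
        + \sum_(c : 1.-tuple A | is_cycle src tgt c) cos (ph 1 c k))%:C%C)
  /\ (forall k : 'I_d -> R,
     \tr (H k *m H k) =
       (\sum_(x < nu) v x ^+ 2
        + 2 * \sum_(c : 1.-tuple A | is_cycle src tgt c)
                 v (src (tnth c ord0)) * cos (ph 1 c k)
        + \sum_(c : 2.-tuple A | is_cycle src tgt c) cos (ph 2 c k))%:C%C)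
  /\ torus_avgC (fun k => \tr (H k)) =
       (\sum_(x < nu) v x
        + \sum_(c : 1.-tuple A | is_cycle0 src tgt tau c) cos (fl 1 c))%:C%C
  /\ torus_avgC (fun k => \tr (H k *m H k)) =
       (\sum_(x < nu) v x ^+ 2
        + 2 * \sum_(c : 1.-tuple A | is_cycle0 src tgt tau c)
                 v (src (tnth c ord0)) * cos (fl 1 c)
        + \sum_(c : 2.-tuple A | is_cycle0 src tgt tau c) cos (fl 2 c))%:C%C
  /\ ((forall e : A, src e <> tgt e) ->
        (forall k : 'I_d -> R, \tr (H k) = (\sum_(x < nu) v x)%:C%C)
        /\ torus_avgC (fun k => \tr (H k)) = (\sum_(x < nu) v x)%:C%C)
  /\ ((forall e : A, src e <> tgt e) ->
      (forall e f : A, src e = src f -> tgt e = tgt f -> e = f) ->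
        (forall k : 'I_d -> R,
           \tr (H k *m H k) = (#|A|%:R + \sum_(x < nu) v x ^+ 2)%:C%C)
        /\ torus_avgC (fun k => \tr (H k *m H k))
             = (#|A|%:R + \sum_(x < nu) v x ^+ 2)%:C%C).
Proof.
move=> H v ph fl.
pose th e k := alpha e + ip (tau e) k.
have Tr1 k := @tr1 R d nu A src tgt inv tau alpha Vp inv_invol src_inv tgt_inv tau_inv alpha_inv k.
have Tr2 k := @tr2 R d nu A src tgt inv tau alpha Vp inv_invol src_inv tgt_inv tau_inv alpha_inv k.
have C1 k : \sum_(c : 1.-tuple A | is_cycle src tgt c) cos (ph 1 c k) =
    \sum_(e | src e == tgt e) cos (th e k).
  rewrite tuple1_sum; apply: eq_big => [e|e _]; first by rewrite is_cycle1 eq_sym.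
  by rewrite /ph /phi flux1 index1.
have C1v k : \sum_(c : 1.-tuple A | is_cycle src tgt c) v (src (tnth c ord0)) * cos (ph 1 c k) =
    \sum_(e | src e == tgt e) v (src e) * cos (th e k).
  rewrite tuple1_sum; apply: eq_big => [e|e _]; first by rewrite is_cycle1 eq_sym.
  by rewrite /ph /phi flux1 index1.
have C2 k : \sum_(c : 2.-tuple A | is_cycle src tgt c) cos (ph 2 c k) =
    \sum_(p : A * A | (src p.2 == tgt p.1) && (tgt p.2 == src p.1)) cos (th p.1 k + th p.2 k).
  rewrite tuple2_sum; apply: eq_big => [[e f]|[e f] _] /=; first by rewrite is_cycle2 eq_sym.
  by rewrite /ph /phi flux2 index2 ipD /th addrACA.
have P1 k : \tr (H k) = (\sum_(x < nu) v x
        + \sum_(c : 1.-tuple A | is_cycle src tgt c) cos (ph 1 c k))%:C%C.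
  by rewrite Tr1 C1.
have P2 k : \tr (H k *m H k) =
       (\sum_(x < nu) v x ^+ 2
        + 2 * \sum_(c : 1.-tuple A | is_cycle src tgt c)
                 v (src (tnth c ord0)) * cos (ph 1 c k)
        + \sum_(c : 2.-tuple A | is_cycle src tgt c) cos (ph 2 c k))%:C%C.
  by rewrite Tr2 C1v C2.
have P3 : torus_avgC (fun k => \tr (H k)) =
       (\sum_(x < nu) v x
        + \sum_(c : 1.-tuple A | is_cycle0 src tgt tau c) cos (fl 1 c))%:C%C.
  rewrite (@avgC_real R d _ (fun k => \sum_(x < nu) v x
        + \sum_(c : 1.-tuple A | is_cycle src tgt c) cos (ph 1 c k))) //.
  have -> : (fun k => \sum_(x < nu) v x
        + \sum_(c : 1.-tuple A | is_cycle src tgt c) cos (ph 1 c k)) =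
     (fun k => \sum_(x < nu) v x
        + \sum_(c : 1.-tuple A | is_cycle src tgt c) 1 * cos (cyc_flux alpha c + ip (cyc_index tau c) k)).
    by apply: funext => k; congr (_ + _); apply: eq_bigr => c _; rewrite mul1r.
  rewrite TA1; congr (_ + _)%:C%C.
  by apply: eq_big => // c _; rewrite mul1r.
have P4 : torus_avgC (fun k => \tr (H k *m H k)) =
       (\sum_(x < nu) v x ^+ 2
        + 2 * \sum_(c : 1.-tuple A | is_cycle0 src tgt tau c)
                 v (src (tnth c ord0)) * cos (fl 1 c)
        + \sum_(c : 2.-tuple A | is_cycle0 src tgt tau c) cos (fl 2 c))%:C%C.
  rewrite (@avgC_real R d _ (fun k => \sum_(x < nu) v x ^+ 2
        + 2 * \sum_(c : 1.-tuple A | is_cycle src tgt c)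
                 v (src (tnth c ord0)) * cos (ph 1 c k)
        + \sum_(c : 2.-tuple A | is_cycle src tgt c) cos (ph 2 c k))) //.
  have -> : (fun k => \sum_(x < nu) v x ^+ 2
        + 2 * \sum_(c : 1.-tuple A | is_cycle src tgt c)
                 v (src (tnth c ord0)) * cos (ph 1 c k)
        + \sum_(c : 2.-tuple A | is_cycle src tgt c) cos (ph 2 c k)) =
     (fun k => \sum_(x < nu) v x ^+ 2
        + \sum_(c : 1.-tuple A | is_cycle src tgt c)
             (2 * v (src (tnth c ord0))) * cos (cyc_flux alpha c + ip (cyc_index tau c) k)
        + \sum_(c : 2.-tuple A | is_cycle src tgt c) 1 * cos (cyc_flux alpha c + ip (cyc_index tau c) k)).
    apply: funext => k; rewrite big_distrr /=; congr (_ + _ + _).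
      by apply: eq_bigr => c _; rewrite mulrA.
    by apply: eq_bigr => c _; rewrite mul1r.
  rewrite TA2 big_distrr /=; congr (_ + _ + _)%:C%C.
    by apply: eq_big => // c _; rewrite mulrA.
  by apply: eq_big => // c _; rewrite mul1r.
have E1 (noloop : forall e : A, src e <> tgt e) k :
    \sum_(c : 1.-tuple A | is_cycle src tgt c) v (src (tnth c ord0)) * cos (ph 1 c k) = 0.
  by rewrite C1v big_pred0 // => e; apply/eqP/noloop.
have E1' (noloop : forall e : A, src e <> tgt e) k :
    \sum_(c : 1.-tuple A | is_cycle src tgt c) cos (ph 1 c k) = 0.
  by rewrite C1 big_pred0 // => e; apply/eqP/noloop.
have E0 (noloop : forall e : A, src e <> tgt e) :
    \sum_(c : 1.-tuple A | is_cycle0 src tgt tau c) cos (fl 1 c) = 0.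
  rewrite tuple1_sum big_pred0 // => e; rewrite /is_cycle0 is_cycle1.
  by case: eqP => // E; case: (noloop e).
split; first exact: P1.
split; first exact: P2.
split; first exact: P3.
split; first exact: P4.
split.
  move=> noloop; split; first by move=> k; rewrite P1 E1' // addr0.
  by rewrite P3 E0 // addr0.
move=> noloop nomulti.
have E2 k : \sum_(c : 2.-tuple A | is_cycle src tgt c) cos (ph 2 c k) = #|A|%:R.
  rewrite C2.
  rewrite (eq_bigl (fun p : A * A => true && (p.2 == inv p.1))); last first.
    move=> [e f] /=; apply/andP/eqP => [[/eqP h1 /eqP h2]|->].
      by apply: nomulti; rewrite ?src_inv ?tgt_inv.
    by rewrite src_inv tgt_inv !eqxx.
  rewrite -(pair_big_dep (fun _ => true) (fun e f => f == inv e) (fun e f => cos (th e k + th f k))) /=.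
  under eq_bigr do rewrite big_pred1_eq.
  have thI e : th (inv e) k = - th e k.
    rewrite /th alpha_inv tau_inv /ip opprD -sumrN; congr (_ + _).
    by apply: eq_bigr => j _; rewrite mulrNz mulNr.
  under eq_bigr do rewrite thI addrN cos0.
  by rewrite sumr_const.
have P6 k : \tr (H k *m H k) = (#|A|%:R + \sum_(x < nu) v x ^+ 2)%:C%C.
  by rewrite P2 E2 E1 // mulr0 addr0 addrC.
split; first exact: P6.
rewrite (@avgC_real R d _ (fun _ => #|A|%:R + \sum_(x < nu) v x ^+ 2)) //.
by rewrite TA_cst.
Qed.
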